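(* Let $X=(\mathbb{R}^n,\|\cdot\|)$ be an $n$-dimensional real CL-space with an absolute norm. Then an element $(|a_1|,\dots,|a_n|)\in S_X$ is a point of upper monotonicity of $X$ if and only if $(|a_1|,\dots,|a_n|)$ is a convex combination of extreme points of $B_X$ all of whose coordinates are nonnegative real numbers.
   Context: A norm on $\mathbb{R}^n$ is absolute if $\|(a_1,\dots,a_n)\|=\|(|a_1|,\dots,|a_n|)\|$ for all scalars and $\|e_j\|=1$ for the canonical basis vectors; $X$ is regarded as a Banach lattice with the coordinatewise order. A Banach space is a CL-space if its unit ball is the absolutely convex hull of every maximal convex subset of its unit sphere; in finite dimensions, equivalently, $|x^*(x)|=1$ for every extreme point $x^*$ of $B_{X^*}$ and every extreme point $x$ of $B_X$. A point $x\in S_X$ with $x\ge0$ is a point of upper monotonicity of $X$ if $\|x+y\|>\|x\|$ for every $y\ge0$ with $y\ne0$. *)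

(* Defs.v *)
From Stdlib Require Import Reals.
From mathcomp Require Import all_boot.
Set Implicit Arguments. Unset Strict Implicit. Unset Printing Implicit Defensive.
Open Scope R_scope.

Definition vec (n : nat) := 'I_n -> R.

Definition vzero n : vec n := fun _ => 0.
Definition vadd n (x y : vec n) : vec n := fun i => x i + y i.
Definition vscale n (a : R) (x : vec n) : vec n := fun i => a * x i.
Definition vabs n (x : vec n) : vec n := fun i => Rabs (x i).
Definition unitv n (j : 'I_n) : vec n := fun i => if i == j then 1 else 0.
Definition vnonneg n (x : vec n) : Prop := forall i, 0 <= x i.

Definition is_norm n (N : vec n -> R) : Prop :=
  (forall x, 0 <= N x) /\
  (forall x, N x = 0 -> x = @vzero n) /\
  (forall a x, N (vscale a x) = Rabs a * N x) /\
  (forall x y, N (vadd x y) <= N x + N y).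

Definition absolute_norm n (N : vec n -> R) : Prop :=
  (forall x, N x = N (vabs x)) /\ (forall j, N (unitv j) = 1).

Definition unit_ball n (N : vec n -> R) (x : vec n) : Prop := N x <= 1.
Definition unit_sphere n (N : vec n -> R) (x : vec n) : Prop := N x = 1.

Definition extreme_point n (S : vec n -> Prop) (x : vec n) : Prop :=
  S x /\ forall y z t, S y -> S z -> 0 < t < 1 ->
    x = vadd (vscale t y) (vscale (1 - t) z) -> y = z.

(* linear functionals on R^n, represented by their coefficient vectors *)
Definition apply_fun n (c x : vec n) : R := \big[Rplus/0]_(i < n) (c i * x i).

Definition dual_ball n (N : vec n -> R) (c : vec n) : Prop :=
  forall x, Rabs (apply_fun c x) <= N x.

Definition CL_space n (N : vec n -> R) : Prop :=
  forall c x, extreme_point (dual_ball N) c -> extreme_point (unit_ball N) x ->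
    Rabs (apply_fun c x) = 1.

Definition upper_monotone_point n (N : vec n -> R) (x : vec n) : Prop :=
  unit_sphere N x /\ vnonneg x /\
  forall y, vnonneg y -> y <> @vzero n -> N (vadd x y) > N x.

Definition convex_comb_of n (P : vec n -> Prop) (x : vec n) : Prop :=
  exists (k : nat) (lam : 'I_k -> R) (p : 'I_k -> vec n),
    (forall j, 0 <= lam j) /\ \big[Rplus/0]_(j < k) lam j = 1 /\
    (forall j, P (p j)) /\
    (forall i, x i = \big[Rplus/0]_(j < k) (lam j * p j i)).

(* Main.v *)
Require Import Defs.
From HB Require Import structures.
From Stdlib Require Import Reals Lra Classical FunctionalExtensionality.
From mathcomp Require Import all_boot.
Set Implicit Arguments. Unset Strict Implicit. Unset Printing Implicit Defensive.
Open Scope R_scope.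
Lemma Rplus_assoc' : associative Rplus. Proof. intros x y z; ring. Qed.
HB.instance Definition _ := Monoid.isComLaw.Build R 0 Rplus Rplus_assoc' Rplus_comm Rplus_0_l.
Notation "\rsum_ ( i < k ) F" := (\big[Rplus/0]_(i < k) F)
  (at level 41, F at level 41, i, k at level 50).
Lemma sumZ k c (F : 'I_k -> R) : \rsum_(i < k) (c * F i) = c * \rsum_(i<k) F i.
Proof.
symmetry; apply: (big_morph (fun x => c * x)); [intros x y; ring | ring].
Qed.
Lemma sumD k (F G : 'I_k -> R) : \rsum_(i < k) (F i + G i) = \rsum_(i<k) F i + \rsum_(i<k) G i.
Proof. by rewrite big_split. Qed.
Lemma sumB k (F G : 'I_k -> R) : \rsum_(i < k) (F i - G i) = \rsum_(i<k) F i - \rsum_(i<k) G i.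
Proof.
transitivity (\rsum_(i<k) (F i + (-1) * G i)).
  apply: eq_bigr => i _; ring.
rewrite sumD sumZ; ring.
Qed.
Lemma sum0 k (F : 'I_k -> R) : (forall i, F i = 0) -> \rsum_(i<k) F i = 0.
Proof. move=> H; apply: big1 => i _; apply H. Qed.

Definition sh (j0 l : nat) := if (l < j0)%N then l else l.+1.

Lemma sum_remove k (f : nat -> R) j0 : (j0 <= k)%N ->
  \rsum_(j < k.+1) f j = f j0 + \rsum_(l < k) f (sh j0 l).
Proof.
elim: k j0 => [|k IH] j0 Hj0.
  rewrite big_ord_recr !big_ord0 /=. move: Hj0; rewrite leqn0 => /eqP ->; ring.
rewrite big_ord_recr /=.
case: (leqP j0 k) => Hjk.
  rewrite (IH j0 Hjk) [in RHS]big_ord_recr /=.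
  have -> : sh j0 k = k.+1 by rewrite /sh ltnNge Hjk.
  ring.
have Hj : j0 = k.+1 by apply/eqP; rewrite eqn_leq Hj0 Hjk.
subst j0.
rewrite [in RHS]big_ord_recr /=.
have -> : sh k.+1 k = k by rewrite /sh ltnSn.
have E : \rsum_(i < k) f (sh k.+1 i) = \rsum_(i < k) f i.
  apply: eq_bigr => i _; rewrite /sh (ltn_trans (ltn_ord i) (ltnSn k)) //.
rewrite E big_ord_recr /=; ring.
Qed.

Lemma ord_split n (i : 'I_n.+1) :
  i = ord_max \/ exists i' : 'I_n, i = widen_ord (leqnSn n) i'.
Proof.
case: i => m Hm.
case: (ltnP m n) => Hmn.
  right; exists (Ordinal Hmn); exact: val_inj.
left; apply: val_inj => /=; apply/eqP; rewrite eqn_leq Hmn andbT.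
by rewrite -ltnS.
Qed.

Definition lcomb n k (a : nat -> R) (D : nat -> vec n) (i : 'I_n) :=
  \rsum_(j < k) (a j * D j i).

Lemma dep n : forall k (D : nat -> vec n), (n < k)%N ->
  exists a : nat -> R, (forall i, lcomb k a D i = 0) /\
    exists j, (j < k)%N /\ a j <> 0.
Proof.
elim: n => [|n IH] k D Hk.
  exists (fun _ => 1); split; first by case.
  exists 0%N; split => //; lra.
pose r (v : vec n.+1) : vec n := fun i => v (widen_ord (leqnSn n) i).
case: (classic (exists j0, (j0 < k)%N /\ D j0 ord_max <> 0)) => [[j0 [Hj0 Hp]]|Hall].
-
  set p := D j0 ord_max in Hp.
  case: k Hk Hj0 => [//|k'] Hk Hj0.
  pose E (l : nat) : vec n := fun i =>
    D (sh j0 l) (widen_ord (leqnSn n) i) - (D (sh j0 l) ord_max / p) * D j0 (widen_ord (leqnSn n) i).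
  have Hk' : (n < k')%N by [].
  have [b [Hb [l0 [Hl0 Hbl0]]]] := IH k' E Hk'.
  pose a (j : nat) := if j == j0 then - \rsum_(l < k') (b l * (D (sh j0 l) ord_max / p))
                      else if (j < j0)%N then b j else b j.-1.
  have Hash : forall l, a (sh j0 l) = b l.
    move=> l; rewrite /a /sh; case: (ltnP l j0) => Hl.
      by rewrite (ltn_eqF Hl) Hl.
    have -> : (l.+1 == j0) = false by apply/eqP => Heq; move: Hl; rewrite -Heq ltnn.
    by rewrite ltnNge (leqW Hl).
  exists a; split.
  + move=> i; rewrite /lcomb.
    rewrite (@sum_remove k' (fun j => a j * D j i) j0 Hj0).
    have Hs : \rsum_(l<k') (a (sh j0 l) * D (sh j0 l) i) = \rsum_(l<k') (b l * D (sh j0 l) i).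
      by apply: eq_bigr => l _; rewrite Hash.
    rewrite Hs.
    have Ha0 : a j0 = - \rsum_(l < k') (b l * (D (sh j0 l) ord_max / p)) by rewrite /a eqxx.
    rewrite Ha0.
    set S := \rsum_(l < k') (b l * (D (sh j0 l) ord_max / p)).
    have HT : \rsum_(l < k') (b l * (D (sh j0 l) i - D (sh j0 l) ord_max / p * D j0 i))
       = \rsum_(l < k') (b l * D (sh j0 l) i) - D j0 i * S.
      rewrite /S -sumZ -sumB; apply: eq_bigr => l _; ring.
    suff : \rsum_(l < k') (b l * (D (sh j0 l) i - D (sh j0 l) ord_max / p * D j0 i)) = 0.
      rewrite HT => H; etransitivity; [|exact: H]; ring.
    case: (ord_split i) => [->|[i' ->]].
      apply: sum0 => l; rewrite /p; field; exact: Hp.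
    exact: (Hb i').
  + exists (sh j0 l0); split; last by rewrite Hash.
    rewrite /sh; case: (ltnP l0 j0) => _ //.
    by apply: (ltn_trans Hl0).
- have Hz : forall j, (j < k)%N -> D j ord_max = 0.
    move=> j Hj; apply: NNPP => Hn; apply: Hall; by exists j.
  have Hk' : (n < k)%N by apply: (ltn_trans (ltnSn n)).
  have [b [Hb [l0 [Hl0 Hbl0]]]] := IH k (fun j => r (D j)) Hk'.
  exists b; split; last by exists l0.
  move=> i; case: (ord_split i) => [->|[i' ->]].
    rewrite /lcomb; apply: sum0 => j; rewrite Hz //; ring.
  exact: (Hb i').
Qed.

Lemma split_l k1 k2 (i : 'I_k1) : split (lshift k2 i) = inl i.
Proof. exact: (unsplitK (inl i : 'I_k1 + 'I_k2)). Qed.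
Lemma split_r k1 k2 (i : 'I_k2) : split (rshift k1 i) = inr i.
Proof. exact: (unsplitK (inr i : 'I_k1 + 'I_k2)). Qed.

Lemma cc_mix n (P : vec n -> Prop) (x y z : vec n) al : 0 <= al <= 1 ->
  convex_comb_of P y -> convex_comb_of P z ->
  (forall i, x i = al * y i + (1 - al) * z i) -> convex_comb_of P x.
Proof.
move=> Hal [k1 [l1 [p1 [H1a [H1b [H1c H1d]]]]]] [k2 [l2 [p2 [H2a [H2b [H2c H2d]]]]]] Hx.
exists (k1 + k2)%N.
exists (fun j => match split j with inl a => al * l1 a | inr b => (1 - al) * l2 b end).
exists (fun j => match split j with inl a => p1 a | inr b => p2 b end).
split; [|split; [|split]].
- move=> j; case: (split j) => b.
    have := H1a b; nra.
  have := H2a b; nra.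
- rewrite big_split_ord /=.
  have E1 : \rsum_(i < k1) (match split (lshift k2 i) with inl a => al * l1 a | inr b => (1 - al) * l2 b end)
            = \rsum_(i < k1) (al * l1 i) by apply: eq_bigr => i _; rewrite split_l.
  have E2 : \rsum_(i < k2) (match split (rshift k1 i) with inl a => al * l1 a | inr b => (1 - al) * l2 b end)
            = \rsum_(i < k2) ((1 - al) * l2 i) by apply: eq_bigr => i _; rewrite split_r.
  rewrite E1 E2 !sumZ H1b H2b; ring.
- by move=> j; case: (split j).
- move=> i; rewrite Hx H1d H2d big_split_ord /=.
  have E1 : \rsum_(j < k1) ((match split (lshift k2 j) with inl a => al * l1 a | inr b => (1 - al) * l2 b end) *
              (match split (lshift k2 j) with inl a => p1 a | inr b => p2 b end) i)
            = \rsum_(j < k1) (al * (l1 j * p1 j i)) by apply: eq_bigr => j _; rewrite split_l; ring.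
  have E2 : \rsum_(j < k2) ((match split (rshift k1 j) with inl a => al * l1 a | inr b => (1 - al) * l2 b end) *
              (match split (rshift k1 j) with inl a => p1 a | inr b => p2 b end) i)
            = \rsum_(j < k2) ((1 - al) * (l2 j * p2 j i)) by apply: eq_bigr => j _; rewrite split_r; ring.
  by rewrite E1 E2 !sumZ.
Qed.

Lemma cc_single n (P : vec n -> Prop) (x : vec n) : P x -> convex_comb_of P x.
Proof.
move=> Hx; exists 1%N, (fun _ => 1), (fun _ => x); split; [|split; [|split]].
- move=> _; lra.
- by rewrite big_ord1.
- by [].
- move=> i; rewrite big_ord1; ring.
Qed.

Definition vlin n (u : vec n) (s : R) (d : vec n) : vec n := fun i => u i + s * d i.
Definition vneg n (d : vec n) : vec n := fun i => -1 * d i.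
Definition inL n (K : vec n -> Prop) (u w : vec n) :=
  exists t, 0 < t /\ forall s, Rabs s <= t -> K (vlin u s w).
Definition convexK n (K : vec n -> Prop) := forall (y z : vec n) t, K y -> K z -> 0 <= t <= 1 ->
  K (fun i => t * y i + (1 - t) * z i).
Definition lineK n (K : vec n -> Prop) := forall (u d : vec n), K u -> (exists i, d i <> 0) ->
  exists s, K (vlin u s d) /\ forall s', s < s' -> ~ K (vlin u s' d).
Definition indep n k (D : nat -> vec n) := forall a, (forall i, lcomb k a D i = 0) ->
  forall j, (j < k)%N -> a j = 0.
Definition in_span n k (D : nat -> vec n) (w : vec n) := exists a, forall i, w i = lcomb k a D i.
Definition Jinv n (K : vec n -> Prop) k D u :=
  forall w, inL K u w -> in_span k D w -> forall i, w i = 0.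

Lemma Keq n (K : vec n -> Prop) (x y : vec n) : (forall i, x i = y i) -> K x -> K y.
Proof. move=> H; have -> // : x = y by apply: functional_extensionality. Qed.

Lemma inL_comb n (K : vec n -> Prop) u w1 w2 c : convexK K -> inL K u w1 -> inL K u w2 ->
  inL K u (fun i => w1 i + c * w2 i).
Proof.
move=> Kc [t1 [Ht1 H1]] [t2 [Ht2 H2]].
set m := Rmin t1 (t2 / (1 + Rabs c)).
have Hc : 0 <= Rabs c by apply: Rabs_pos.
have Hm1 : m <= t1 by apply: Rmin_l.
have Hm2 : m <= t2 / (1 + Rabs c) by apply: Rmin_r.
have Hm0 : 0 < m by apply: Rmin_pos => //; apply: Rdiv_lt_0_compat; lra.
have Hm3 : m * (1 + Rabs c) <= t2.
  have -> : t2 = t2 / (1 + Rabs c) * (1 + Rabs c) by field; lra.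
  apply: Rmult_le_compat_r; lra.
exists (m / 2); split; first lra.
move=> s Hs.
have Ka := H1 (2 * s) ltac:(rewrite Rabs_mult Rabs_right; lra).
have Kb := H2 (2 * s * c) ltac:(rewrite !Rabs_mult (Rabs_right 2); [nra|lra]).
have := Kc _ _ (/2) Ka Kb ltac:(lra).
apply: Keq => i; rewrite /vlin; field.
Qed.

Lemma inL_scale n (K : vec n -> Prop) u w c : c <> 0 -> inL K u w -> inL K u (fun i => c * w i).
Proof.
move=> Hc [t [Ht H]].
have Hc' : 0 < Rabs c by apply: Rabs_pos_lt.
exists (t / Rabs c); split; first by apply: Rdiv_lt_0_compat.
move=> s Hs.
have Hs' : Rabs (s * c) <= t.
  rewrite Rabs_mult.
  have -> : t = t / Rabs c * Rabs c by field; lra.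
  apply: Rmult_le_compat_r; lra.
have := H _ Hs'; apply: Keq => i; rewrite /vlin; ring.
Qed.

Lemma inL_sub n (K : vec n -> Prop) (u up um : vec n) al : convexK K -> 0 < al <= 1 -> K um ->
  (forall i, u i = al * up i + (1 - al) * um i) -> forall w, inL K up w -> inL K u w.
Proof.
move=> Kc Hal Kum Hu w [t [Ht H]].
exists (al * t); split; first nra.
move=> s Hs.
have Hs' : Rabs (s / al) <= t.
  rewrite Rabs_mult Rabs_inv (Rabs_right al); last lra.
  apply: (Rmult_le_reg_r al); first lra.
  have -> : Rabs s * / al * al = Rabs s by field; lra.
  lra.
have := Kc _ _ al (H _ Hs') Kum ltac:(lra).
apply: Keq => i; rewrite /vlin Hu; field; lra.
Qed.

Lemma notinL_end n (K : vec n -> Prop) u d s :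
  (forall s', s < s' -> ~ K (vlin u s' d)) -> ~ inL K (vlin u s d) d.
Proof.
move=> H [t [Ht Ht']].
apply: (H (s + t)); first lra.
have := Ht' t ltac:(rewrite Rabs_right; lra).
apply: Keq => i; rewrite /vlin; ring.
Qed.

Definition ext_fam n k (D : nat -> vec n) (d : vec n) : nat -> vec n :=
  fun j => if j == k then d else D j.

Lemma lcomb_ext n k (D : nat -> vec n) d a i :
  lcomb k.+1 a (ext_fam k D d) i = lcomb k a D i + a k * d i.
Proof.
rewrite /lcomb big_ord_recr /= /ext_fam eqxx; congr (_ + _).
by apply: eq_bigr => j _; rewrite (ltn_eqF (ltn_ord j)).
Qed.

Lemma lcomb_scale n k (D : nat -> vec n) a c i :
  lcomb k (fun j => c * a j) D i = c * lcomb k a D i.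
Proof. rewrite /lcomb -sumZ; apply: eq_bigr => j _; ring. Qed.

Lemma indep_ext n (K : vec n -> Prop) k D u d : indep k D -> Jinv K k D u -> inL K u d ->
  (exists i, d i <> 0) -> indep k.+1 (ext_fam k D d).
Proof.
move=> Hind HJ HdL [i0 Hi0] a Ha.
have Hak : a k = 0.
  apply: NNPP => Hak; apply: Hi0.
  apply: (HJ d HdL) => //.
  exists (fun j => - / a k * a j) => i.
  rewrite lcomb_scale.
  have := Ha i; rewrite lcomb_ext => Hi.
  have -> : lcomb k a D i = - (a k * d i) by lra.
  field; exact Hak.
have Hk : forall i, lcomb k a D i = 0.
  move=> i; have := Ha i; rewrite lcomb_ext Hak; lra.
move=> j Hj; rewrite ltnS leq_eqVlt in Hj.
case/orP: Hj => [/eqP ->|Hj] //.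
exact: Hind.
Qed.

Lemma J_step n (K : vec n -> Prop) u v k D d : convexK K -> inL K u d ->
  (forall w, inL K v w -> inL K u w) -> ~ inL K v d -> Jinv K k D u ->
  Jinv K k.+1 (ext_fam k D d) v.
Proof.
move=> Kc HdL Hsub Hnd HJ w HwL [a Ha].
have Hwu := Hsub w HwL.
case: (Req_dec (a k) 0) => Hak.
  apply: HJ => //; exists a => i; rewrite Ha lcomb_ext Hak; ring.
have Hv : forall i, w i + - a k * d i = 0.
  apply: HJ; first exact: inL_comb.
  exists a => i; rewrite Ha lcomb_ext; ring.
exfalso; apply: Hnd.
have := inL_scale (Rinv_neq_0_compat _ Hak) HwL.
have -> // : (fun i => / a k * w i) = d.
apply: functional_extensionality => i.
have := Hv i => H; have -> : w i = a k * d i by lra.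
field; exact Hak.
Qed.

Lemma abs_le x t : Rabs x <= t -> - t <= x <= t.
Proof. rewrite /Rabs; case: Rcase_abs => *; lra. Qed.

Lemma not_extreme n (K : vec n -> Prop) u : convexK K -> K u -> ~ extreme_point K u ->
  exists d, inL K u d /\ exists i, d i <> 0.
Proof.
move=> Kc Ku Hne; apply: NNPP => H; apply: Hne; split => // y z t Ky Kz Ht Hu.
apply: functional_extensionality => i; apply: NNPP => Hyz; apply: H.
exists (fun i => y i - z i); split; last by exists i; lra.
exists (Rmin t (1 - t)); split; first by apply: Rmin_pos; lra.
move=> s Hs.
have H1 := Rmin_l t (1 - t); have H2 := Rmin_r t (1 - t).
have Hs' := abs_le Hs.
have := Kc y z (t + s) Ky Kz ltac:(lra).
apply: Keq => j; rewrite /vlin Hu /vadd /vscale; ring.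
Qed.

Lemma mink_aux n (K : vec n -> Prop) : convexK K -> lineK K ->
  forall m k D u, (n <= k + m)%N -> K u -> indep k D -> Jinv K k D u ->
  convex_comb_of (extreme_point K) u.
Proof.
move=> Kc Kl m; elim: m => [|m IH] k D u Hnk Ku Hind HJ;
  (case: (classic (extreme_point K u)) => Hext; first exact: cc_single);
  have [d [HdL Hdnz]] := not_extreme Kc Ku Hext;
  have Hind' := indep_ext Hind HJ HdL Hdnz.
- exfalso.
  have Hlt : (n < k.+1)%N by rewrite addn0 in Hnk; rewrite ltnS.
  have [a [Ha [j [Hj Haj]]]] := dep (ext_fam k D d) Hlt.
  exact: (Haj (Hind' a Ha j Hj)).
- have [sp [Kp Hp]] := Kl u d Ku Hdnz.
  have Hdnz' : exists i, vneg d i <> 0.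
    case: Hdnz => i Hi; exists i; rewrite /vneg; lra.
  have [sm [Km Hm]] := Kl u (vneg d) Ku Hdnz'.
  case: HdL => [t [Ht HtK]].
  have Htp : t <= sp.
    apply: Rnot_lt_le => Hlt; apply: (Hp t Hlt); apply: HtK; rewrite Rabs_right; lra.
  have Htm : t <= sm.
    apply: Rnot_lt_le => Hlt; apply: (Hm t Hlt).
    have := HtK (- t) ltac:(rewrite Rabs_Ropp Rabs_right; lra).
    apply: Keq => i; rewrite /vlin /vneg; ring.
  set up := vlin u sp d. set um := vlin u sm (vneg d).
  set al := sm / (sp + sm).
  have Hal : 0 < al < 1.
    rewrite /al; split.
      apply: Rdiv_lt_0_compat; lra.
    apply: (Rmult_lt_reg_r (sp + sm)); first lra.
    have -> : sm / (sp + sm) * (sp + sm) = sm by field; lra.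
    lra.
  have Hu : forall i, u i = al * up i + (1 - al) * um i.
    move=> i; rewrite /up /um /vlin /vneg /al; field; lra.
  have Hu' : forall i, u i = (1 - al) * um i + (1 - (1 - al)) * up i.
    move=> i; rewrite Hu; ring.
  have HdL : inL K u d by exists t.
  have Hsubp : forall w, inL K up w -> inL K u w.
    apply: (inL_sub Kc _ Km Hu); lra.
  have Hsubm : forall w, inL K um w -> inL K u w.
    apply: (inL_sub Kc _ Kp Hu'); lra.
  have Hnp : ~ inL K up d by apply: notinL_end.
  have Hnm : ~ inL K um d.
    move=> H; apply: (notinL_end Hm).
    have := inL_scale (c := -1) ltac:(lra) H.
    by rewrite /vneg.
  have Hnk' : (n <= k.+1 + m)%N by rewrite addSn -addnS.
  have Cp := IH k.+1 (ext_fam k D d) up Hnk' Kp Hind' (J_step Kc HdL Hsubp Hnp HJ).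
  have Cm := IH k.+1 (ext_fam k D d) um Hnk' Km Hind' (J_step Kc HdL Hsubm Hnm HJ).
  apply: (cc_mix (al := al)) Cp Cm Hu; lra.
Qed.

Lemma minkowski n (K : vec n -> Prop) : convexK K -> lineK K ->
  forall u, K u -> convex_comb_of (extreme_point K) u.
Proof.
move=> Kc Kl u Ku.
apply: (@mink_aux n K Kc Kl n 0%N (fun _ => u)) => //.
move=> w _ [a Ha] i; rewrite Ha /lcomb big_ord0 //.
Qed.

Lemma lineK_of n (K : vec n -> Prop) :
  (forall u d, K u -> (exists i, d i <> 0) -> exists B, forall s, K (vlin u s d) -> s <= B) ->
  (forall u d s0, (forall del, 0 < del -> exists s, K (vlin u s d) /\ s0 - del < s /\ s <= s0) ->
     K (vlin u s0 d)) ->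
  lineK K.
Proof.
move=> Hb Hc u d Ku Hd.
have [B HB] := Hb u d Ku Hd.
pose E := fun s => K (vlin u s d).
have HE0 : E 0 by rewrite /E; apply: (Keq (x := u)) => // i; rewrite /vlin; ring.
have HbE : bound E by exists B => s Hs; exact: HB.
have [m [Hm1 Hm2]] := completeness E HbE (ex_intro _ 0 HE0).
exists m; split.
- apply: Hc => del Hdel.
  apply: NNPP => H.
  have : m <= m - del.
    apply: Hm2 => s Hs.
    apply: Rnot_lt_le => Hlt; apply: H; exists s; split => //; split => //.
    exact: Hm1.
  lra.
- move=> s' Hs' Ks'; have := Hm1 s' Ks'; lra.
Qed.


Lemma norm0 n (N : vec n -> R) : is_norm N -> N (@vzero n) = 0.
Proof.
move=> [_ [_ [Hs _]]].
have := Hs 0 (@vzero n); rewrite Rabs_R0 Rmult_0_l.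
have -> // : vscale 0 (@vzero n) = @vzero n.
apply: functional_extensionality => i; rewrite /vscale /vzero; ring.
Qed.

Lemma norm_conv n (N : vec n -> R) (y z : vec n) t : is_norm N -> 0 <= t <= 1 ->
  N (fun i => t * y i + (1 - t) * z i) <= t * N y + (1 - t) * N z.
Proof.
move=> [_ [_ [Hs Ht]]] H.
have := Ht (vscale t y) (vscale (1 - t) z); rewrite !Hs.
rewrite (Rabs_right t); last lra. rewrite (Rabs_right (1 - t)); last lra.
done.
Qed.

Lemma ball_convex n (N : vec n -> R) : is_norm N -> convexK (unit_ball N).
Proof.
move=> HN y z t Hy Hz Ht; rewrite /unit_ball.
have := norm_conv y z HN Ht; rewrite /unit_ball in Hy Hz; nra.
Qed.

Lemma norm_pos_nz n (N : vec n -> R) d : is_norm N -> (exists i, d i <> 0) -> 0 < N d.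
Proof.
move=> [Hp [Hd _]] [i Hi].
case: (Rle_lt_or_eq_dec 0 (N d) (Hp d)) => // H.
exfalso; apply: Hi; by rewrite (Hd d (esym H)).
Qed.

Lemma ball_line n (N : vec n -> R) : is_norm N -> lineK (unit_ball N).
Proof.
move=> HN; have HN' := HN; case: HN' => [Hp [Hd [Hsc Ht]]].
apply: lineK_of.
- move=> u d Hu Hnz.
  have Hd0 := norm_pos_nz HN Hnz.
  exists (2 / N d) => s Hs; rewrite /unit_ball in Hs Hu.
  have H1 : N (vscale s d) <= N (vlin u s d) + N (vscale (-1) u).
    have := Ht (vlin u s d) (vscale (-1) u).
    have -> // : vadd (vlin u s d) (vscale (-1) u) = vscale s d.
    apply: functional_extensionality => i; rewrite /vadd /vlin /vscale; ring.
  rewrite !Hsc Rabs_Ropp Rabs_R1 in H1.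
  have H2 : Rabs s * N d <= 2 by have := Hp u; lra.
  apply: (Rmult_le_reg_r (N d)) => //.
  have -> : 2 / N d * N d = 2 by field; lra.
  have := Rle_abs s; nra.
- move=> u d s0 Hc; rewrite /unit_ball.
  apply: Rnot_lt_le => Hgt.
  set eps := N (vlin u s0 d) - 1.
  have Hnd := Hp d.
  have [s [Ks [Hs1 Hs2]]] := Hc (eps / (N d + 1)) ltac:(apply: Rdiv_lt_0_compat; rewrite /eps; lra).
  rewrite /unit_ball in Ks.
  have H1 : N (vlin u s0 d) <= N (vlin u s d) + N (vscale (s0 - s) d).
    have := Ht (vlin u s d) (vscale (s0 - s) d).
    have -> // : vadd (vlin u s d) (vscale (s0 - s) d) = vlin u s0 d.
    apply: functional_extensionality => i; rewrite /vadd /vlin /vscale; ring.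
  rewrite Hsc Rabs_right in H1; last lra.
  have H2 : (s0 - s) * N d <= eps / (N d + 1) * N d by apply: Rmult_le_compat_r; lra.
  have H3 : eps / (N d + 1) * N d < eps.
    have Heps : 0 < eps by rewrite /eps; lra.
    apply: (Rmult_lt_reg_r (N d + 1)); first lra.
    have -> : eps / (N d + 1) * N d * (N d + 1) = eps * N d by field; lra.
    nra.
  have Hdef : eps = N (vlin u s0 d) - 1 by []. lra.
Qed.

Lemma norm_abs_eq n (N : vec n -> R) (x y : vec n) : absolute_norm N ->
  (forall i, Rabs (x i) = Rabs (y i)) -> N x = N y.
Proof.
move=> [Ha _] H; rewrite (Ha x) (Ha y).
have -> // : vabs x = vabs y by apply: functional_extensionality => i; exact: H.
Qed.

Lemma coord_le n (N : vec n -> R) (x : vec n) (i0 : 'I_n) : is_norm N -> absolute_norm N ->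
  Rabs (x i0) <= N x.
Proof.
move=> HN HA.
pose z (m : nat) : vec n := fun i => if (i < m)%N && (i != i0) then 0 else x i.
have Hz : forall m, N (z m) <= N x.
  elim=> [|m IH].
    right; congr N; apply: functional_extensionality => i; rewrite /z ltn0 //.
  pose w : vec n := fun i => if (i == m :> nat) && (i != i0) then - z m i else z m i.
  have Hw : N w = N (z m).
    apply: norm_abs_eq => // i; rewrite /w; case: ifP => _ //; exact: Rabs_Ropp.
  have Heq : z m.+1 = (fun i => /2 * z m i + (1 - /2) * w i).
    apply: functional_extensionality => i; rewrite /w /z.
    case: (eqVneq (i : nat) m) => [Hi|Hi] /=.
      rewrite Hi ltnSn ltnn /=; case: (i != i0) => /=; field.
    rewrite ltnS leq_eqVlt (negbTE Hi) /=; case: ((i < m)%N && (i != i0)); field.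
  rewrite Heq; eapply Rle_trans; first (apply: norm_conv => //; lra).
  rewrite Hw; lra.
have Hn := Hz n.
have Ez : z n = vscale (x i0) (unitv i0).
  apply: functional_extensionality => i; rewrite /z /vscale /unitv ltn_ord /=.
  case: (eqVneq i i0) => [->|Hi] /=; ring.
rewrite Ez in Hn.
case: HN => [_ [_ [Hs _]]]; case: HA => [_ Hu].
rewrite Hs Hu Rmult_1_r in Hn *. exact: Hn.
Qed.

Lemma sum_ge0 k (F : 'I_k -> R) : (forall i, 0 <= F i) -> 0 <= \rsum_(i<k) F i.
Proof.
move=> H; apply: (big_ind (fun x => 0 <= x)) => //; [lra | intros; lra].
Qed.

Lemma sum_le k (F G : 'I_k -> R) : (forall i, F i <= G i) -> \rsum_(i<k) F i <= \rsum_(i<k) G i.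
Proof.
move=> H; apply: (big_ind2 (fun x y => x <= y)) => //; [lra | intros; lra].
Qed.

Lemma sum_abs k (F : 'I_k -> R) : Rabs (\rsum_(i<k) F i) <= \rsum_(i<k) Rabs (F i).
Proof.
apply: (big_ind2 (fun x y => Rabs x <= y)).
- rewrite Rabs_R0; lra.
- intros x1 x2 y1 y2 H1 H2. eapply Rle_trans; [apply Rabs_triang|lra].
- intros; lra.
Qed.

Lemma sum_single k (F : 'I_k -> R) (j : 'I_k) : (forall i, i != j -> F i = 0) ->
  \rsum_(i<k) F i = F j.
Proof.
move=> H; rewrite (bigD1 j) //= big1 ?Rplus_0_r // => i /andP [_ Hi]; exact: H.
Qed.

Lemma sum_ge_single k (F : 'I_k -> R) (j : 'I_k) : (forall i, 0 <= F i) ->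
  F j <= \rsum_(i<k) F i.
Proof.
move=> H; rewrite (bigD1 j) //=.
set S := bigop _ _ _.
have: 0 <= S.
  rewrite /S; apply: (big_ind (fun x => 0 <= x)) => //; [lra | intros; lra].
lra.
Qed.

Lemma sum_nz k (F : 'I_k -> R) : \rsum_(i<k) F i <> 0 -> exists i, F i <> 0.
Proof.
move=> H; apply: NNPP => H'; apply: H; apply: sum0 => i.
apply: NNPP => Hi; apply: H'; by exists i.
Qed.

Lemma sum_exch k m (F : 'I_k -> 'I_m -> R) :
  \rsum_(i<k) \rsum_(j<m) F i j = \rsum_(j<m) \rsum_(i<k) F i j.
Proof. exact: exchange_big. Qed.

Lemma apply_lin n (c1 c2 x : vec n) a b :
  apply_fun (fun i => a * c1 i + b * c2 i) x = a * apply_fun c1 x + b * apply_fun c2 x.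
Proof.
rewrite /apply_fun -!sumZ -sumD; apply: eq_bigr => i _; ring.
Qed.

Lemma apply_vlin n (u d x : vec n) s :
  apply_fun (vlin u s d) x = apply_fun u x + s * apply_fun d x.
Proof.
rewrite /apply_fun -!sumZ -sumD; apply: eq_bigr => i _; rewrite /vlin; ring.
Qed.

Lemma apply_unit n (c : vec n) (i0 : 'I_n) : apply_fun c (unitv i0) = c i0.
Proof.
rewrite /apply_fun (sum_single (j := i0)).
  by rewrite /unitv eqxx Rmult_1_r.
by move=> i Hi; rewrite /unitv (negbTE Hi) Rmult_0_r.
Qed.

Lemma apply_unit' n (x : vec n) (i0 : 'I_n) : apply_fun (unitv i0) x = x i0.
Proof.
rewrite /apply_fun (sum_single (j := i0)).
  by rewrite /unitv eqxx Rmult_1_l.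
by move=> i Hi; rewrite /unitv (negbTE Hi) Rmult_0_l.
Qed.

Lemma dual_convex n (N : vec n -> R) : convexK (dual_ball N).
Proof.
move=> y z t Hy Hz Ht x; rewrite apply_lin.
eapply Rle_trans; first apply: Rabs_triang.
rewrite !Rabs_mult (Rabs_right t); last lra. rewrite (Rabs_right (1 - t)); last lra.
have := Hy x; have := Hz x; nra.
Qed.

Lemma dual_line n (N : vec n -> R) : is_norm N -> absolute_norm N -> lineK (dual_ball N).
Proof.
move=> HN HA; have Hp := proj1 HN.
apply: lineK_of.
- move=> u d Hu [i0 Hi0].
  have Hd : 0 < Rabs (d i0) by apply: Rabs_pos_lt.
  exists ((1 + Rabs (u i0)) / Rabs (d i0)) => s Hs.
  have H1 := Hs (unitv i0).
  rewrite apply_vlin !apply_unit (proj2 HA) in H1.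
  have H2 : Rabs (s * d i0) <= Rabs (u i0 + s * d i0) + Rabs (u i0).
    have := Rabs_triang (u i0 + s * d i0) (- u i0); rewrite Rabs_Ropp.
    have -> : u i0 + s * d i0 + - u i0 = s * d i0 by ring. done.
  rewrite Rabs_mult in H2.
  apply: (Rmult_le_reg_r (Rabs (d i0))) => //.
  have -> : (1 + Rabs (u i0)) / Rabs (d i0) * Rabs (d i0) = 1 + Rabs (u i0) by field; lra.
  have := Rle_abs s; nra.
- move=> u d s0 Hc x.
  apply: Rnot_lt_le => Hgt.
  set A := apply_fun u x. set B := apply_fun d x.
  rewrite apply_vlin -/A -/B in Hgt.
  set eps := Rabs (A + s0 * B) - N x.
  have HB := Rabs_pos B.
  have [s [Ks [Hs1 Hs2]]] := Hc (eps / (Rabs B + 1)) ltac:(apply: Rdiv_lt_0_compat; rewrite /eps; lra).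
  have H0 := Ks x; rewrite apply_vlin -/A -/B in H0.
  have H1 : Rabs (A + s0 * B) <= Rabs (A + s * B) + (s0 - s) * Rabs B.
    have -> : A + s0 * B = (A + s * B) + (s0 - s) * B by ring.
    eapply Rle_trans; first apply: Rabs_triang.
    rewrite Rabs_mult (Rabs_right (s0 - s)); lra.
  have H2 : (s0 - s) * Rabs B <= eps / (Rabs B + 1) * Rabs B by apply: Rmult_le_compat_r; lra.
  have H3 : eps / (Rabs B + 1) * Rabs B < eps.
    have Heps : 0 < eps by rewrite /eps; lra.
    apply: (Rmult_lt_reg_r (Rabs B + 1)); first lra.
    have -> : eps / (Rabs B + 1) * Rabs B * (Rabs B + 1) = eps * Rabs B by field; lra.
    nra.
  have Hdef : eps = Rabs (A + s0 * B) - N x by [].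
  lra.
Qed.

Definition sg n (q : vec n) (i : 'I_n) : R := if Rlt_dec (q i) 0 then -1 else 1.
Definition flip n (q v : vec n) : vec n := fun i => sg q i * v i.

Lemma sg_sq n (q : vec n) i : sg q i * sg q i = 1.
Proof. rewrite /sg; case: Rlt_dec => ? /=; ring. Qed.
Lemma sg_abs n (q : vec n) i : sg q i * q i = Rabs (q i).
Proof.
rewrite /sg; case: Rlt_dec => H /=.
  rewrite Rabs_left //; ring.
rewrite Rabs_right; [ring|lra].
Qed.
Lemma sg_abs' n (q : vec n) i x : Rabs (sg q i * x) = Rabs x.
Proof.
rewrite Rabs_mult /sg; case: Rlt_dec => ? /=; rewrite ?Rabs_Ropp Rabs_R1; ring.
Qed.
Lemma flipK n (q v : vec n) : flip q (flip q v) = v.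
Proof.
apply: functional_extensionality => i; rewrite /flip -Rmult_assoc sg_sq; ring.
Qed.

Lemma ext_abs n (K : vec n -> Prop) (q : vec n) :
  (forall v, K v -> K (flip q v)) -> extreme_point K q -> extreme_point K (vabs q).
Proof.
move=> HK [Kq Hq]; split.
  have := HK q Kq; apply: Keq => i; rewrite /flip /vabs sg_abs //.
move=> y z t Ky Kz Ht Heq.
have E : q = vadd (vscale t (flip q y)) (vscale (1 - t) (flip q z)).
  apply: functional_extensionality => i.
  have := f_equal (fun f => f i) Heq; rewrite /vabs /vadd /vscale /flip => /= H.
  have -> : q i = sg q i * Rabs (q i) by rewrite -sg_abs -Rmult_assoc sg_sq; ring.
  rewrite H; ring.
have := Hq _ _ _ (HK _ Ky) (HK _ Kz) Ht E => Hf.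
by rewrite -(flipK q y) Hf flipK.
Qed.

Lemma ball_flip n (N : vec n -> R) (q : vec n) : absolute_norm N ->
  forall v, unit_ball N v -> unit_ball N (flip q v).
Proof.
move=> HA v; rewrite /unit_ball (@norm_abs_eq n N (flip q v) v) // => i.
by rewrite /flip sg_abs'.
Qed.

Lemma apply_flip n (q c x : vec n) : apply_fun (flip q c) x = apply_fun c (flip q x).
Proof. rewrite /apply_fun; apply: eq_bigr => i _; rewrite /flip; ring. Qed.

Lemma dual_flip n (N : vec n -> R) (q : vec n) : absolute_norm N ->
  forall c, dual_ball N c -> dual_ball N (flip q c).
Proof.
move=> HA c Hc x; rewrite apply_flip.
rewrite -(@norm_abs_eq n N (flip q x) x) //.
by move=> i; rewrite /flip sg_abs'.
Qed.

Lemma cc_vec n k (lam : 'I_k -> R) (p : 'I_k -> vec n) :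
  (fun i => \rsum_(j < k) (lam j * p j i)) = \big[@vadd n/@vzero n]_(j < k) vscale (lam j) (p j).
Proof.
apply: functional_extensionality => i.
symmetry; apply: (big_morph (fun v : vec n => v i)) => //.
Qed.

Lemma norm_cc n (N : vec n -> R) k (lam : 'I_k -> R) (p : 'I_k -> vec n) : is_norm N ->
  (forall j, 0 <= lam j) ->
  N (fun i => \rsum_(j < k) (lam j * p j i)) <= \rsum_(j < k) (lam j * N (p j)).
Proof.
move=> HN Hl; rewrite cc_vec.
have HN' := HN; case: HN' => [Hp [Hd [Hs Ht]]].
apply: (big_ind2 (fun v r => N v <= r)).
- rewrite norm0 //; lra.
- move=> x1 x2 y1 y2 H1 H2; eapply Rle_trans; [apply: Ht|lra].
- move=> j _; rewrite Hs Rabs_right; [lra|have := Hl j; lra].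
Qed.

Theorem corollary5p4 (n : nat) (N : vec n -> R) :
  is_norm N -> absolute_norm N -> CL_space N ->
  forall a : vec n, unit_sphere N (vabs a) ->
  (upper_monotone_point N (vabs a) <->
   convex_comb_of (fun p => extreme_point (unit_ball N) p /\ vnonneg p) (vabs a)).
Proof.
move=> HN HA HCL a Hsph; split.
- move=> [_ [Hnn Hstr]].
  have Hball : unit_ball N (vabs a) by rewrite /unit_ball Hsph; lra.
  have [k [lam [q [Hl [Hsum [Hq Hx]]]]]] := minkowski (ball_convex HN) (ball_line HN) Hball.
  exists k, lam, (fun j => vabs (q j)); split; [exact: Hl|split; [exact: Hsum|split]].
    move=> j; split; first exact: (ext_abs (ball_flip (q j) HA) (Hq j)).
    by move=> i; apply: Rabs_pos.
  pose w : vec n := fun i => \rsum_(j < k) (lam j * vabs (q j) i).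
  pose y : vec n := fun i => w i - vabs a i.
  have Hy : vnonneg y.
    move=> i; rewrite /y /w.
    have E1 : vabs a i = Rabs (\rsum_(j<k) (lam j * q j i)).
      rewrite -Hx Rabs_pos_eq //; apply: Rabs_pos.
    rewrite E1.
    have := sum_abs (fun j : 'I_k => lam j * q j i).
    have -> : \rsum_(j < k) Rabs (lam j * q j i) = \rsum_(j < k) (lam j * vabs (q j) i).
      apply: eq_bigr => j _; rewrite Rabs_mult (Rabs_right (lam j)) // ; have := Hl j; lra.
    lra.
  have Hw : N w <= 1.
    eapply Rle_trans; first exact: norm_cc.
    have H1 : \rsum_(j<k) (lam j * N (vabs (q j))) <= \rsum_(j<k) lam j.
      apply: sum_le => j /=. have := Hl j; have := proj1 (Hq j); rewrite /unit_ball -(proj1 HA) => *. nra.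
    rewrite Hsum in H1; exact: H1.
  case: (classic (y = @vzero n)) => Hy0.
    move=> i; have := f_equal (fun f => f i) Hy0 => H.
    change (w i - vabs a i = 0) in H. change (vabs a i = w i); lra.
  have := Hstr y Hy Hy0.
  have -> : vadd (vabs a) y = w.
    apply: functional_extensionality => i; rewrite /vadd /y; ring.
  rewrite Hsph; lra.
- move=> [k [lam [p [Hl [Hsum [Hp Hx]]]]]].
  split; first exact: Hsph.
  split; first by move=> i; apply: Rabs_pos.
  move=> y Hy Hy0.
  have [i0 Hi0] : exists i0, y i0 <> 0.
    apply: NNPP => H; apply: Hy0; apply: functional_extensionality => i.
    apply: NNPP => Hi; apply: H; by exists i.
  have Hyi0 : 0 < y i0 by have := Hy i0; lra.
  have Hu : dual_ball N (unitv i0).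
    by move=> x; rewrite apply_unit'; apply: coord_le.
  have [k' [mu [c [Hmu [Hmusum [Hc Hcx]]]]]] :=
    minkowski (@dual_convex n N) (dual_line HN HA) Hu.
  have Hs1 : \rsum_(j < k') (mu j * c j i0) <> 0.
    by rewrite -Hcx /unitv eqxx; lra.
  have [j Hj] := sum_nz Hs1.
  have Hcj : c j i0 <> 0 by move=> H; apply: Hj; rewrite H; ring.
  set c' := vabs (c j).
  have Hc' : extreme_point (dual_ball N) c' := ext_abs (dual_flip (c j) HA) (Hc j).
  have Hc'nn : forall i, 0 <= c' i by move=> i; apply: Rabs_pos.
  have Hcp : forall l, apply_fun c' (p l) = 1.
    move=> l; have := HCL c' (p l) Hc' (proj1 (Hp l)).
    rewrite Rabs_right //; apply: Rle_ge; apply: sum_ge0 => i.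
    apply: Rmult_le_pos; [exact: Hc'nn|exact: (proj2 (Hp l) i)].
  have Hcx1 : apply_fun c' (vabs a) = 1.
    rewrite /apply_fun.
    transitivity (\rsum_(i < n) \rsum_(l < k) (c' i * (lam l * p l i))).
      by apply: eq_bigr => i _; rewrite Hx sumZ.
    rewrite sum_exch.
    transitivity (\rsum_(l < k) (lam l * 1)).
      apply: eq_bigr => l _; rewrite -(Hcp l) /apply_fun -sumZ.
      apply: eq_bigr => i _; ring.
    transitivity (\rsum_(l < k) lam l); [apply: eq_bigr => l _; ring|exact: Hsum].
  have Hcy : c' i0 * y i0 <= apply_fun c' y.
    apply: (sum_ge_single (F := fun i => c' i * y i)) => i.
    apply: Rmult_le_pos; [exact: Hc'nn|exact: Hy].
  have Hc'i0 : 0 < c' i0 by apply: Rabs_pos_lt.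
  have Hadd : apply_fun c' (vadd (vabs a) y) = apply_fun c' (vabs a) + apply_fun c' y.
    rewrite /apply_fun -sumD; apply: eq_bigr => i _; rewrite /vadd; ring.
  have Hd := proj1 Hc' (vadd (vabs a) y).
  rewrite Hadd Hcx1 in Hd.
  have Hpos : 0 < c' i0 * y i0 by apply: Rmult_lt_0_compat.
  rewrite Rabs_right in Hd; last lra.
  rewrite /unit_sphere in Hsph; rewrite Hsph; lra.
Qed.
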